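(* Let $\mathcal{H}=(V,\mathcal{A})$ be a multi-head HyTN in which every node of $V$ is the tail of at least one hyperarc, and let $G_{\mathcal{H}}$ be its associated mean payoff game. If $\mathcal{H}$ is consistent, then every node of $G_{\mathcal{H}}$ is a winning start position for Player 1.
   Context: A multi-head HyTN is a pair $\mathcal{H}=(V,\mathcal{A})$, $V$ a finite node set, $\mathcal{A}$ a finite set of hyperarcs $A=(t_A,H_A,w_A)$ with tail $t_A\in V$, nonempty head set $H_A\subseteq V\setminus\{t_A\}$ and weights $w_A(v)\in\mathbb{R}$ for $v\in H_A$. A scheduling $s:V\to\mathbb{R}$ is feasible if $s(t_A)\ge\min_{v\in H_A}\{s(v)-w_A(v)\}$ for all $A\in\mathcal{A}$; $\mathcal{H}$ is consistent if a feasible scheduling exists. A mean payoff game (MPG) is a finite directed graph with real arc weights whose node set is partitioned into $V_0$ (nodes of Player 0) and $V_1$ (nodes of Player 1), where every node has at least one outgoing arc. A play from a start node $v_0$ proceeds in moves: when the pebble is at $v_{t-1}\in V_p$, Player $p$ chooses an arc $e_t$ leaving $v_{t-1}$ and the pebble moves to its head $v_t$. The play ends at the first $t$ such that $v_t=v_{t'}$ for some $t'<t$; Player 0 wins if $\frac{1}{t-t'}\sum_{i=t'+1}^{t}w(e_i)<0$, otherwise Player 1 wins. A strategy for Player $p$ maps each history ending in a node of $V_p$ to an outgoing arc of that node. A node $s$ is a winning start position for Player 1 if Player 1 has a strategy such that every play starting at $s$ in which Player 1 follows it is won by Player 1. The associated game $G_{\mathcal{H}}$ has $V_0=V$, $V_1=\mathcal{A}$,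 and arc set $\{(t_A,A,0)\mid A\in\mathcal{A}\}\cup\{(A,h,w_A(h))\mid A\in\mathcal{A},h\in H_A\}$ (an arc $(x,y,w)$ goes from $x$ to $y$ with weight $w$). *)

(* Defs.v *)
From HB Require Import structures.
From mathcomp Require Import all_boot all_order all_algebra.
Set Implicit Arguments. Unset Strict Implicit. Unset Printing Implicit Defensive.
Import Order.TTheory GRing.Theory Num.Theory.
Local Open Scope ring_scope.

Definition arc (N : finType) (R : realFieldType) : Type := (N * N * R)%type.
Definition asrc {N : finType} {R : realFieldType} (e : arc N R) : N := e.1.1.
Definition adst {N : finType} {R : realFieldType} (e : arc N R) : N := e.1.2.
Definition awt  {N : finType} {R : realFieldType} (e : arc N R) : R := e.2.

(* A mean payoff game: nodes N, the nodes of Player 1 (V_1 = owner1, V_0 its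
   complement), and a finite set (list) of arcs. *)
Record MPG (R : realFieldType) := {
  mpg_node : finType;
  mpg_owner1 : pred mpg_node;
  mpg_arcs : seq (arc mpg_node R)
}.

Section Game.
Variable R : realFieldType.
Variable G : MPG R.
Local Notation N := (mpg_node G).
Local Notation A := (arc N R).

Definition mpg_wf : Prop :=
  forall x : N, exists2 e, e \in @mpg_arcs R G & asrc e = x.

Fixpoint is_walk (s : N) (es : seq A) : bool :=
  match es with
  | [::] => true
  | e :: es' => (e \in @mpg_arcs R G) && (asrc e == s) && is_walk (adst e) es'
  end.

Definition walk_nodes (s : N) (es : seq A) : seq N := s :: map adst es.

(* A history (s, es) is a walk from s that has not ended yet: its nodes
   v_0..v_t are pairwise distinct. *)
Definition history (s : N) (es : seq A) : bool :=
  is_walk s es && uniq (walk_nodes s es).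

(* A complete play from s: a walk that ends at the first t with v_t = v_t'
   for some t' < t. *)
Definition complete_play (s : N) (es : seq A) : bool :=
  [&& is_walk s es, (0 < size es)%N,
      uniq (take (size es) (walk_nodes s es)) &
      last s (map adst es) \in take (size es) (walk_nodes s es)].

(* Strategies map a history (start node, arcs so far) to an arc. *)
Definition strategy := N -> seq A -> A.

Definition valid_strategy1 (sigma : strategy) : Prop :=
  forall s es, history s es -> @mpg_owner1 R G (last s (map adst es)) ->
    sigma s es \in @mpg_arcs R G /\ asrc (sigma s es) = last s (map adst es).

Definition follows1 (sigma : strategy) (s : N) (es : seq A) : Prop :=
  forall i, (i < size es)%N ->
    @mpg_owner1 R G (nth s (walk_nodes s es) i) ->
    nth (sigma s (take i es)) es i = sigma s (take i es).

(* Winner of a complete play: t' is the first index of v_t; Player 0 wins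
   iff the mean weight of the cycle e_{t'+1} .. e_t is negative. *)
Definition player1_wins (s : N) (es : seq A) : Prop :=
  let t := size es in
  let t' := index (last s (map adst es)) (walk_nodes s es) in
  ~ ((\sum_(e <- drop t' es) awt e) / (t - t')%:R < 0).

Definition winning_start1 (s : N) : Prop :=
  exists sigma : strategy, valid_strategy1 sigma /\
    forall es, complete_play s es -> follows1 sigma s es -> player1_wins s es.

End Game.
Arguments winning_start1 {R} G s.
Arguments mpg_wf {R} G.

(* Nodes V, hyperarcs indexed by A; hyperarc a has tail (tl a), head set (hd a)
   and weights (w a v) for v in hd a. *)
Definition HyTN_wf (V A : finType) (tl : A -> V) (hd : A -> {set V}) : Prop :=
  forall a, hd a != set0 /\ tl a \notin hd a.

(* s(t_A) >= min_{v in H_A} (s v - w_A v); H_A is finite and nonempty, so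
   the minimum is attained by some v in H_A. *)
Definition feasible_scheduling (R : realFieldType) (V A : finType)
  (tl : A -> V) (hd : A -> {set V}) (w : A -> V -> R) (s : V -> R) : Prop :=
  forall a, exists2 v, v \in hd a & s v - w a v <= s (tl a).

Definition consistent (R : realFieldType) (V A : finType)
  (tl : A -> V) (hd : A -> {set V}) (w : A -> V -> R) : Prop :=
  exists s : V -> R, feasible_scheduling tl hd w s.

(* The associated game G_H: V_0 = V, V_1 = A. *)
Definition assoc_arcs (R : realFieldType) (V A : finType)
  (tl : A -> V) (hd : A -> {set V}) (w : A -> V -> R) : seq (arc (V + A)%type R) :=
  [seq (inl (tl a), inr a, 0) | a <- enum A] ++
  flatten [seq [seq (inr a, inl h, w a h) | h <- enum (hd a)] | a <- enum A].

Definition assoc_game (R : realFieldType) (V A : finType)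
  (tl : A -> V) (hd : A -> {set V}) (w : A -> V -> R) : MPG R :=
  {| mpg_node := (V + A)%type;
     mpg_owner1 := fun x => if x is inr _ then true else false;
     mpg_arcs := assoc_arcs tl hd w |}.

(* Main.v *)
Require Import Defs.
From HB Require Import structures.
From mathcomp Require Import all_boot all_order all_algebra.
Set Implicit Arguments. Unset Strict Implicit. Unset Printing Implicit Defensive.
Import Order.TTheory GRing.Theory Num.Theory.

Section Aux.
Variable R : realFieldType.
Variable G : MPG R.
Local Notation Nd := (mpg_node G).
Local Notation Ar := (Defs.arc Nd R).

Lemma walk_nth (x : Nd) (es : seq Ar) d : is_walk x es ->
  forall i, (i < size es)%N -> nth d es i \in @mpg_arcs R G /\
    asrc (nth d es i) = nth x (walk_nodes x es) i.
Proof.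
elim: es x => [|e es IH] x //= /andP[/andP[He /eqP Hs] Hw] [|i] Hi //=.
have [H1 H2] := IH _ Hw i Hi; split=> //; rewrite H2.
by apply: set_nth_default; rewrite /= ltnS size_map ltnW.
Qed.

Lemma walk_drop (x : Nd) (es : seq Ar) k : is_walk x es -> (k <= size es)%N ->
  is_walk (nth x (walk_nodes x es) k) (drop k es) /\
  last (nth x (walk_nodes x es) k) (map adst (drop k es)) = last x (map adst es).
Proof.
elim: es x k => [|e es IH] x [|k] //= Hw Hk.
case/andP: Hw => _ Hw.
rewrite (set_nth_default (adst e)) /=; last by rewrite ltnS size_map.
exact: IH.
Qed.

Lemma last_take_nodes (x : Nd) (es : seq Ar) i : (i <= size es)%N ->
  last x (map adst (take i es)) = nth x (walk_nodes x es) i.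
Proof.
elim: es x i => [|e es IH] x [|i] //= Hi.
rewrite IH //; case: i Hi => // i Hi /=.
by rewrite (set_nth_default (adst e)) // size_map.
Qed.

Local Open Scope ring_scope.
Lemma walk_sum (p : Nd -> R) (x : Nd) (es : seq Ar) : is_walk x es ->
  all (fun e => p (adst e) - p (asrc e) <= awt e) es ->
  p (last x (map adst es)) - p x <= \sum_(e <- es) awt e.
Proof.
elim: es x => [|e es IH] x /=; first by rewrite big_nil subrr.
case/andP=> /andP[_ /eqP Hs] Hw /andP[He Ha].
rewrite big_cons.
have := IH _ Hw Ha; rewrite Hs in He.
move=> H; apply: le_trans (lerD He H).
by rewrite (addrC (p (adst e) - p x)) addrA subrK.
Qed.
End Aux.

Local Open Scope ring_scope.

Theorem mainTheorem8 (R : realFieldType) (V A : finType)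
  (tl : A -> V) (hd : A -> {set V}) (w : A -> V -> R) :
  HyTN_wf tl hd ->
  (forall v : V, exists a : A, tl a = v) ->
  consistent tl hd w ->
  forall x : mpg_node (assoc_game tl hd w),
    winning_start1 (assoc_game tl hd w) x.
Proof.
move=> _ _ [sc Hsc] x0.
pose f a := odflt (tl a) [pick v in hd a | sc v - w a v <= sc (tl a)].
have Hf : forall a, f a \in hd a /\ sc (f a) - w a (f a) <= sc (tl a).
  move=> a; rewrite /f; case: pickP => [v /andP[]|H] //=.
  by case: (Hsc a) => v Hv Hle; have := H v; rewrite Hv Hle.
pose sigma : strategy (assoc_game tl hd w) :=
  fun s0 es => match last s0 (map adst es) with
    | inr a => (inr a, inl (f a), w a (f a))
    | inl v => (inl v, inl v, 0) end.
exists sigma; split.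
  move=> s es _ /=; rewrite /sigma; case: (last s _) => // a _; split => //.
  rewrite /= /assoc_arcs mem_cat; apply/orP; right.
  apply/flatten_mapP; exists a; first by rewrite mem_enum.
  by apply: map_f; rewrite mem_enum; case: (Hf a).
move=> es /and4P[Hw Hsz _ _] Hfol.
pose p (n : (V + A)%type) := match n with inl v => sc v | inr a => sc (tl a) end.
set L := last x0 (map adst es).
set t' := index L (walk_nodes x0 es).
have HLin : L \in walk_nodes x0 es by rewrite /L /walk_nodes mem_last.
have Ht' : (t' <= size es)%N.
  by move: HLin; rewrite -index_mem /= size_map ltnS.
have Hnth : nth x0 (walk_nodes x0 es) t' = L by rewrite nth_index.
have [Hwd Hld] := walk_drop Hw Ht'.
rewrite Hnth in Hwd Hld.
have Hall : all (fun e => p (adst e) - p (asrc e) <= awt e) es.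
  apply/(all_nthP (x0, x0, 0)) => i Hi.
  have [Hin Hsrc] := walk_nth (x0, x0, 0) Hw Hi.
  move: Hin Hsrc; rewrite /= /assoc_arcs mem_cat => /orP[].
    case/mapP => a _ -> /= _; by rewrite subrr.
  case/flatten_mapP => a _ /mapP[h _ Heq] Hsrc.
  have Ho : @mpg_owner1 R (assoc_game tl hd w) (nth x0 (walk_nodes x0 es) i).
    by rewrite -Hsrc Heq.
  have := Hfol i Hi Ho.
  rewrite (set_nth_default (x0, x0, 0)) // Heq => ->.
  have E := @last_take_nodes _ _ x0 es i (ltnW Hi); rewrite -Hsrc Heq /= in E.
  rewrite /sigma /=; set y := last _ _.
  have -> : y = inr a by exact: E.
  rewrite /=.
  by case: (Hf a) => _ H; rewrite lerBlDr addrC -lerBlDr.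
have Halld : all (fun e => p (adst e) - p (asrc e) <= awt e) (drop t' es).
  by move: Hall; rewrite -{1}(cat_take_drop t' es) all_cat => /andP[].
have := walk_sum Hwd Halld; rewrite Hld subrr => Hge.
rewrite /player1_wins -/L -/t' => Hlt.
suff : 0 <= (\sum_(e <- drop t' es) awt e) / (size es - t')%:R.
  by rewrite leNgt Hlt.
by apply: divr_ge0.
Qed.
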